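(* (a) For every bracket pattern $w$, the set $\mathbb N_0\setminus A(w)$ is a submonoid of $(\mathbb N_0,+)$. (b) For every submonoid $M$ of $(\mathbb N_0,+)$ such that $\mathbb N_0\setminus M$ is finite, $A(\mathbb N_0\setminus M)=\mathbb N_0\setminus M$. In particular, a bracket pattern $w$ satisfies $w=A(w)$ if and only if $w=\mathbb N_0\setminus M$ for some submonoid $M$ of $(\mathbb N_0,+)$.
   Context: $\mathbb N=\{1,2,\dots\}$, $\mathbb N_0=\mathbb N\cup\{0\}$. A bracket pattern is a non-empty finite subset $w\subseteq\mathbb N$. For any finite subset $w\subseteq\mathbb N$ (in particular for bracket patterns), the completion is $A(w):=\{j-i\mid j\in w,\ i\in\mathbb N_0,\ i\notin w,\ i<j\}$ (so $A(\emptyset)=\emptyset$). A submonoid of $(\mathbb N_0,+)$ is a subset containing $0$ and closed under addition. *)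

(* Defs.v *)
From Stdlib Require Import Arith Lia.

Definition finite_set (w : nat -> Prop) : Prop :=
  exists n, forall x, w x -> x < n.

Definition bracket_pattern (w : nat -> Prop) : Prop :=
  (forall x, w x -> 0 < x) /\ (exists x, w x) /\ finite_set w.

Definition completion (w : nat -> Prop) (k : nat) : Prop :=
  exists j i, w j /\ ~ w i /\ i < j /\ k = j - i.

Definition submonoid (M : nat -> Prop) : Prop :=
  M 0 /\ forall a b, M a -> M b -> M (a + b).

(* Main.v *)
Require Import Defs.
From Stdlib Require Import Arith Lia Classical.

Lemma partA : forall w : nat -> Prop, bracket_pattern w ->
     submonoid (fun n => ~ completion w n).
Proof.
  intros w _. split.
  - intros (j & i & _ & _ & H1 & H2). lia.
  - intros a b Ha Hb (j & i & Hj & Hi & Hij & Hk).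
    destruct (Nat.eq_dec a 0) as [->|Ha0].
    { apply Hb. exists j, i. simpl in Hk. auto. }
    destruct (Nat.eq_dec b 0) as [->|Hb0].
    { apply Ha. exists j, i. repeat split; auto. lia. }
    destruct (classic (w (i + a))) as [H|H].
    + apply Ha. exists (i + a), i. repeat split; auto; lia.
    + apply Hb. exists j, (i + a). repeat split; auto; lia.
Qed.

Lemma partB : forall M : nat -> Prop, submonoid M ->
     forall k, completion (fun n => ~ M n) k <-> ~ M k.
Proof.
  intros M [H0 HM] k. split.
  - intros (j & i & Hj & Hi & Hij & Hk) Mk.
    apply NNPP in Hi. apply Hj.
    replace j with (i + k) by lia. auto.
  - intros Hk. exists k, 0. repeat split; auto.
    destruct k; [contradiction|lia]. lia.
Qed.

Lemma compl_ext : forall w v : nat -> Prop, (forall k, w k <-> v k) ->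
  forall k, completion w k -> completion v k.
Proof.
  intros w v H k (j & i & Hj & Hi & Hij & Hk).
  exists j, i. repeat split; auto; firstorder.
Qed.

Theorem lemma7p13 :
  (* (a) *)
  (forall w : nat -> Prop, bracket_pattern w ->
     submonoid (fun n => ~ completion w n)) /\
  (* (b) *)
  (forall M : nat -> Prop, submonoid M -> finite_set (fun n => ~ M n) ->
     forall k, completion (fun n => ~ M n) k <-> ~ M k) /\
  (* in particular *)
  (forall w : nat -> Prop, bracket_pattern w ->
     ((forall k, w k <-> completion w k) <->
      exists M : nat -> Prop, submonoid M /\ forall k, w k <-> ~ M k)).
Proof.
  split; [exact partA|]. split; [intros M HM _; apply partB; auto|].
  intros w Hw. split.
  - intros H. exists (fun n => ~ w n). split.
    + destruct (partA w Hw) as [H0 H1]. split.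
      * intro c. apply H0. apply H. exact c.
      * intros a b Ha Hb c. apply (H1 a b).
        -- intro x. apply Ha. apply H. exact x.
        -- intro x. apply Hb. apply H. exact x.
        -- apply H. exact c.
    + intro k. split; [tauto|]. intro x. apply NNPP. exact x.
  - intros (M & HM & H) k.
    assert (E : forall k, completion w k <-> ~ M k).
    { intro k'. rewrite <- (partB M HM k'). split; apply compl_ext; firstorder. }
    rewrite E. apply H.
Qed.
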